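(* Let $d\ge 4$ be even, $n=\frac{d^2}{2}$, and consider the $[[d^2,2,d]]$ generalized bicycle code defined by $a(x)=1+x$, $b(x)=1+x^{d+1}$. If all syndrome extractions are performed using the RL pattern, the effective distance of the code is $d$.
   Context: $R_n=\mathbb{F}_2[x]/\langle x^n-1\rangle$, vectors of $\mathbb{F}_2^{2n}$ are pairs $(u,v)$ of elements of $R_n$ (left half, right half), weight = number of nonzero coefficients. Code spaces: $C_2=\{(c(1+x),c(1+x^{d+1}))\}$ (X-stabilizers), $C_1=\{(u,v):u(1+x^{d+1})+v(1+x)=0\}$, $C_2'=\{(c(1+x^{-(d+1)}),c(1+x^{-1}))\}$ (Z-stabilizers), $C_1'=\{(u,v):u(1+x^{-1})+v(1+x^{-(d+1)})=0\}$, $x^{-1}=x^{n-1}$; undetectable X- (resp. Z-) logical errors are elements of $C_1\setminus C_2$ (resp. $C_1'\setminus C_2'$). Each check $x^i(1+x,1+x^{d+1})$ and $x^i(1+x^{-(d+1)},1+x^{-1})$ is measured with one ancilla via four CNOTs. In the RL pattern the ancilla first interacts with the check's two right-half qubits and then with its two left-half qubits, so a single ancilla fault between the two halves propagates to errors of the check's type on its two left-half qubits, i.e. $(x^i(1+x),0)$ for X-checks and $(x^i(1+x^{-(d+1)}),0)$ for Z-checks; any other single ancilla fault is equivalent to at most one data-qubit error. The effective distance is the minimum of $\mathrm{wt}(j)+\mathrm{wt}(u)+\mathrm{wt}(v)$ over $j,u,v\in R_n$ with $(u+j(x)(1+x),v)\in C_1\setminus C_2$ or $(u+j(x)(1+x^{-(d+1)}),v)\in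 C_1'\setminus C_2'$. *)

(* Defs.v *)
(* R_n = F_2[x]/<x^n - 1> is represented by {poly 'F_2}
   taken modulo x^n - 1: elements are polynomials, equality in R_n is
   equality of remainders mod x^n - 1, and the weight of an element is the
   number of nonzero coefficients of its reduced representative. *)
From HB Require Import structures.
From mathcomp Require Import all_boot all_order all_algebra.
Set Implicit Arguments. Unset Strict Implicit. Unset Printing Implicit Defensive.
Import GRing.Theory.
Local Open Scope ring_scope.

Notation F2 := ('F_2 : fieldType).
Notation poly2 := {poly 'F_2}.

Definition modulus (n : nat) : poly2 := 'X^n - 1.

Definition eqR (n : nat) (p q : poly2) : Prop := p %% modulus n = q %% modulus n.

Definition wt (n : nat) (p : poly2) : nat :=
  count (fun c : 'F_2 => c != 0) (p %% modulus n).

(* x^{-k} in R_n, for 0 <= k <= n, is x^{n-k} *)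
Definition xinv (n k : nat) : poly2 := 'X^(n - k).

(* X-stabilizer space C_2 *)
Definition C2 (n d : nat) (u v : poly2) : Prop :=
  exists c : poly2, eqR n u (c * (1 + 'X)) /\ eqR n v (c * (1 + 'X^(d.+1))).
Definition C1 (n d : nat) (u v : poly2) : Prop :=
  eqR n (u * (1 + 'X^(d.+1)) + v * (1 + 'X)) 0.
(* Z-stabilizer space C_2' *)
Definition C2' (n d : nat) (u v : poly2) : Prop :=
  exists c : poly2, eqR n u (c * (1 + xinv n d.+1)) /\ eqR n v (c * (1 + xinv n 1)).
Definition C1' (n d : nat) (u v : poly2) : Prop :=
  eqR n (u * (1 + xinv n 1) + v * (1 + xinv n d.+1)) 0.

Definition X_logical (n d : nat) (u v : poly2) : Prop := C1 n d u v /\ ~ C2 n d u v.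
Definition Z_logical (n d : nat) (u v : poly2) : Prop := C1' n d u v /\ ~ C2' n d u v.

(* (j,u,v) is a fault configuration (j = hook/ancilla faults, u,v = data errors)
   producing an undetectable logical error under the RL pattern *)
Definition RL_bad (n d : nat) (j u v : poly2) : Prop :=
  X_logical n d (u + j * (1 + 'X)) v \/ Z_logical n d (u + j * (1 + xinv n d.+1)) v.

Definition effective_distance_RL (n d D : nat) : Prop :=
  (exists j u v, RL_bad n d j u v /\ (wt n j + wt n u + wt n v)%N = D) /\
  (forall j u v, RL_bad n d j u v -> (D <= wt n j + wt n u + wt n v)%N).

(* Main.v *)
Require Import Defs.
From HB Require Import structures.
From mathcomp Require Import all_boot all_order all_algebra.
From mathcomp Require Import ring zify.
Set Implicit Arguments. Unset Strict Implicit. Unset Printing Implicit Defensive.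
Import GRing.Theory.
Local Open Scope ring_scope.

Lemma F2_cases (c : 'F_2) : c = 0 \/ c = 1.
Proof. by case: c => [[|[|k]]] //= Hk; [left|right]; apply/val_inj. Qed.

Lemma F2_addxx (c : 'F_2) : c + c = 0.
Proof. case: (F2_cases c) => ->; first by rewrite addr0. by apply/val_inj. Qed.

Implicit Types p q : poly2.
Definition pw (p : poly2) : nat := count (fun c : 'F_2 => c != 0) p.

Definition supp (p : poly2) : seq nat := [seq i <- iota 0 (size p) | p`_i != 0].

Lemma pw_supp p : pw p = size (supp p).
Proof.
rewrite /pw /supp size_filter -{1}(mkseq_nth 0 p) /mkseq count_map //.
Qed.

Lemma mem_supp p k : (k \in supp p) = (p`_k != 0).
Proof.
rewrite mem_filter mem_iota add0n /=.
case: (ltnP k (size p)) => [H|H]; first by rewrite andbT.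
by rewrite nth_default // eqxx.
Qed.

Lemma pw_le_list p (L : seq nat) : (forall k, p`_k != 0 -> k \in L) -> (pw p <= size L)%N.
Proof.
move=> H; rewrite pw_supp; apply: uniq_leq_size.
  by rewrite filter_uniq // iota_uniq.
by move=> k; rewrite mem_supp; apply: H.
Qed.

Lemma pwD p q : (pw (p + q) <= pw p + pw q)%N.
Proof.
rewrite (pw_supp p) (pw_supp q) -size_cat; apply: pw_le_list => k; rewrite coefD mem_cat !mem_supp.
by case: (p`_k =P 0) => [->|] //=; rewrite add0r.
Qed.

Lemma pwM p q : (pw (p * q) <= pw p * pw q)%N.
Proof.
rewrite (pw_supp p) (pw_supp q) -(size_allpairs addn); apply: pw_le_list => k.
rewrite coefM => Hk.
have [j _ Hj] : exists2 j : 'I_k.+1, true & p`_j * q`_(k - j) != 0.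
  apply/exists_inP; apply: contraNT Hk => /exists_inPn H.
  by rewrite big1 // => j _; apply/eqP; move: (H j isT); rewrite negbK.
apply/allpairsP; exists (nat_of_ord j, (k - j)%N) => /=.
move: Hj; case: (p`_j =P 0) => [->|/eqP Hp]; first by rewrite mul0r eqxx.
case: (q`_(k - j) =P 0) => [->|/eqP Hq]; first by rewrite mulr0 eqxx.
by rewrite !mem_supp Hp Hq subnKC // -ltnS ltn_ord.
Qed.

Lemma pwXn k : pw 'X^k = 1%N.
Proof. rewrite /pw polyseqXn -cats1 count_cat /= count_nseq /= mul0n //. Qed.

Section Mod.
Variable n : nat.
Hypothesis hn : (0 < n)%N.
Local Notation m := (modulus n).

Lemma size_m : size m = n.+1.
Proof. by rewrite /modulus size_XnsubC. Qed.

Lemma monic_m : m \is monic.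
Proof. by rewrite /modulus monicXnsubC. Qed.

Lemma Xn_mod i : 'X^i %% m = 'X^(i %% n).
Proof.
have E : 'X^i = 'X^(i %% n) + 'X^(i %% n) * (('X^n) ^+ (i %/ n) - 1) :> poly2.
  by rewrite mulrBr mulr1 addrCA subrr addr0 -exprM -exprD addnC mulnC -divn_eq.
rewrite E subrX1 mulrCA -/(modulus n) modpD modp_mulr addr0 modp_small // size_polyXn size_m ltnS ltn_mod //.
Qed.

Lemma pw_mod p : (pw (p %% m) <= pw p)%N.
Proof.
rewrite (pw_supp p); apply: leq_trans (pw_le_list (L := map (modn^~ n) (supp p)) _) _; last by rewrite size_map.
move=> k.
rewrite -{1}(coefK p) poly_def.
rewrite (big_morph (fun q : poly2 => q %% m) (modpD m) (mod0p m)).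
under eq_bigr => i _ do rewrite modpZl Xn_mod.
rewrite coef_sum => Hk.
have [j _ Hj] : exists2 j : 'I_(size p), true & (p`_j *: 'X^(j %% n))`_k != 0.
  apply/exists_inP; apply: contraNT Hk => /exists_inPn H.
  by rewrite big1 // => j _; apply/eqP; move: (H j isT); rewrite negbK.
move: Hj; rewrite coefZ coefXn.
case: (p`_j =P 0) => [->|/eqP Hp]; first by rewrite mul0r eqxx.
case: (k =P (j %% n)%N) => [Ek|_]; last by rewrite mulr0 eqxx.
move=> _; apply/mapP; exists (nat_of_ord j) => //.
by rewrite mem_supp.
Qed.
End Mod.

Lemma poly_addxx (p : poly2) : p + p = 0.
Proof. by apply/polyP => i; rewrite coefD coef0 F2_addxx. Qed.

Lemma arithA (h wp wq J : nat) : (2 <= h -> 2*h*h <= h*wp + h*wq + 2*J -> 2*h <= J + wp + wq)%N.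
Proof. move=> H1 H2. nia. Qed.
Lemma arithBC (h wp wq J : nat) : (2 <= h -> 2*h*h <= (h+1)*wp + (h-1)*wq + 2*J -> 2*h*h <= wp + (2*h-1)*wq + 2*J -> 2*h <= J + wp + wq)%N.
Proof. move=> H1 H2 H3. nia. Qed.

Section Quot.
Variable n : nat.
Hypothesis hn : (0 < n)%N.
Local Notation m := (modulus n).
Local Notation Q := {poly %/ m}.
Local Notation io := (in_qpoly m).

Lemma Qinj (a b : Q) : polyn a = polyn b -> a = b.
Proof. exact: val_inj. Qed.

Lemma mkm : mk_monic m = m.
Proof. by rewrite /mk_monic size_m // monic_m // ltnS hn. Qed.

Lemma val_iota p : (io p : poly2) = p %% m.
Proof. by rewrite /= mkm Pdiv.IdomainMonic.modpE // monic_m. Qed.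

Lemma size_valQ (c : Q) : (size (c : poly2) <= n)%N.
Proof. by apply: leq_trans (size_npoly c) _; rewrite mkm size_m. Qed.

Lemma iota_val (c : Q) : io (c : poly2) = c.
Proof. have := val_iota (c : poly2); rewrite modp_small ?size_m ?ltnS ?size_valQ // => H; exact: val_inj H. Qed.

Lemma eqR_iota p q : eqR n p q <-> io p = io q.
Proof.
rewrite /eqR; split => [H|H].
  apply: val_inj; exact: (etrans (val_iota p) (etrans H (esym (val_iota q)))).
by rewrite -!val_iota H.
Qed.

Definition wq (c : Q) := pw (c : poly2).

Lemma wt_iota p : wt n p = wq (io p).
Proof. by rewrite /wq val_iota. Qed.

Lemma wqD (a b : Q) : (wq (a + b)%R <= wq a + wq b)%N.
Proof. exact: pwD. Qed.

Lemma val_mulQ (a b : Q) : ((a * b)%R : poly2) = ((a : poly2) * (b : poly2)) %% m.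
Proof. rewrite poly_of_qpolyM Pdiv.IdomainMonic.modpE ?monic_m //; congr (Pdiv.Ring.rmodp _ _); exact: mkm. Qed.

Lemma wqM (a b : Q) : (wq (a * b)%R <= wq a * wq b)%N.
Proof. rewrite /wq val_mulQ; exact: leq_trans (pw_mod _ _) (pwM _ _). Qed.

Definition x : Q := io 'X.

Lemma xE k : x ^+ k = io 'X^k.
Proof. by rewrite rmorphXn. Qed.

Lemma wqX k : (wq (x ^+ k)%R <= 1)%N.
Proof. by rewrite /wq xE val_iota (leq_trans (pw_mod _ _)) // pwXn. Qed.

Lemma wq0 : wq 0 = 0%N.
Proof. by rewrite /wq /pw /= polyseq0. Qed.

Lemma iota_m : io m = 0.
Proof. by apply: Qinj; rewrite val_iota modpp. Qed.

Lemma xn : x ^+ n = 1.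
Proof.
have : io ('X^n - 1) = 0 by apply: iota_m.
rewrite rmorphB rmorph1 => H; apply/eqP; rewrite -subr_eq0 xE; apply/eqP; exact: H.
Qed.

Lemma Q_addxx (c : Q) : c + c = 0.
Proof. by apply: Qinj; rewrite poly_of_qpolyD poly_addxx. Qed.

Lemma Q_opp (c : Q) : - c = c.
Proof. by apply/eqP; rewrite eq_sym -subr_eq0 opprK Q_addxx. Qed.


Lemma geo (w : Q) L : (1 + w) * \sum_(k < L) w ^+ k = 1 + w ^+ L.
Proof. by have := subrX1 w L; rewrite !Q_opp addrC [1 + w]addrC => <-. Qed.

Definition Nq : Q := \sum_(k < n) x ^+ k.

Lemma NqE : Nq = io (\poly_(i < n) 1).
Proof.
rewrite /Nq poly_def rmorph_sum; apply: eq_bigr => i _.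
by rewrite scale1r xE.
Qed.

Lemma val_Nq : polyn Nq = \poly_(i < n) 1.
Proof. by rewrite NqE val_iota modp_small // (size_m hn) ltnS size_poly. Qed.

Lemma wqN : wq Nq = n.
Proof.
rewrite /wq val_Nq pw_supp.
have Hs : size (\poly_(i < n) (1 : 'F_2)) = n.
  by rewrite size_poly_eq // oner_eq0.
have -> : supp (\poly_(i < n) 1) = iota 0 n.
  rewrite /supp Hs (eq_in_filter (a2 := predT)) ?filter_predT // => i.
  by rewrite mem_iota add0n => /andP[_ Hi]; rewrite coef_poly Hi oner_eq0.
by rewrite size_iota.
Qed.

Lemma Nq_neq0 : Nq != 0.
Proof. by apply/eqP => H; have := wqN; rewrite H wq0 => E; move: hn; rewrite -E ltnn. Qed.

Lemma xNq1 : (1 + x) * Nq = 0.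
Proof. by rewrite /Nq geo xn Q_addxx. Qed.

Lemma xNq : x * Nq = Nq.
Proof.
have := xNq1; rewrite mulrDl mul1r => /eqP; rewrite addr_eq0 Q_opp => /eqP H; exact: esym H.
Qed.

Lemma xkNq k : x ^+ k * Nq = Nq.
Proof. by elim: k => [|k IH]; rewrite ?expr0 ?mul1r // exprS -mulrA IH xNq. Qed.

Lemma wq_sum L (f : nat -> nat) : (wq (\sum_(k < L) x ^+ (f k))%R <= L)%N.
Proof.
elim: L => [|L IH]; first by rewrite big_ord0 wq0.
rewrite big_ord_recr /=; apply: leq_trans (wqD _ _) _.
by rewrite -(addn1 L) leq_add // wqX.
Qed.


Lemma F2_opp (c : 'F_2) : - c = c.
Proof. by apply/eqP; rewrite eq_sym -subr_eq0 opprK F2_addxx. Qed.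

Lemma io_scale (c : 'F_2) (p : poly2) : io (c *: p) = c *: io p.
Proof. by rewrite linearZ. Qed.

Lemma const_lemma (w : Q) : (1 + x) * w = 0 -> w = 0 \/ w = Nq.
Proof.
move=> H.
set r := polyn w.
set c := r`_n.-1.
set r' := 'X * r - c *: m.
have Hr : forall k, (n <= k)%N -> r`_k = 0.
  by apply/leq_sizeP; exact: size_valQ.
have Hr'c : forall k, r'`_k = (if k == 0%N then 0 else r`_k.-1) - c * ((k == n)%:R - (k == 0%N)%:R).
  by move=> k; rewrite /r' coefB coefXM coefZ /modulus coefB coefXn coef1.
have Hsz : (size r' <= n)%N.
  apply/leq_sizeP => k Hk; rewrite Hr'c.
  have Hk0 : (k == 0%N) = false by apply/negbTE; rewrite -lt0n (leq_trans hn Hk).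
  rewrite Hk0 subr0.
  case: (ltngtP k n) => [Hlt|Hgt|->].
  - by move: Hk; rewrite leqNgt Hlt.
  - by rewrite Hr ?mulr0 ?subr0 //; rewrite -ltnS prednK // (leq_trans hn (ltnW Hgt)).
  - by rewrite /= mulr1n mulr1 /c subrr.
have Exw : x * w = io r'.
  rewrite /r' rmorphB /= linearZ /= iota_m scaler0 subr0 rmorphM /=.
  by rewrite /r iota_val.
have Vr' : polyn (io r') = r' by rewrite val_iota modp_small // (size_m hn) ltnS.
have Hsum : r + r' = 0.
  have : w + x * w = 0 by rewrite -H mulrDl mul1r.
  rewrite Exw => /(congr1 (fun q : Q => polyn q)).
  by rewrite poly_of_qpolyD Vr' /r.
have Hstep : forall k, (0 < k < n)%N -> r`_k = r`_k.-1.
  move=> k /andP[Hk0 Hkn].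
  have := congr1 (fun p : poly2 => p`_k) Hsum.
  rewrite /= coefD coef0 Hr'c.
  have -> : (k == 0%N) = false by apply/negbTE; rewrite -lt0n.
  have -> : (k == n) = false by apply/negbTE; rewrite neq_ltn Hkn.
  rewrite subrr mulr0 subr0 => /eqP; rewrite addr_eq0 F2_opp => /eqP //.
have Hall : forall k, (k < n)%N -> r`_k = r`_0.
  elim=> [//|k IH] Hk.
  by rewrite Hstep ?Hk //= IH // ltnW.
have Er : r = r`_0 *: \poly_(i < n) 1.
  apply/polyP => k; rewrite coefZ coef_poly.
  case: ltnP => Hk; first by rewrite mulr1 Hall.
  by rewrite mulr0 Hr.
have Ew : w = r`_0 *: Nq.
  by rewrite NqE -io_scale -Er /r iota_val.
case: (F2_cases r`_0) => E0; rewrite Ew E0 ?scale0r ?scale1r; [left|right] => //.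
Qed.

Lemma factor_lemma (P : Q) : P * Nq = 0 -> exists c, P = c * (1 + x).
Proof.
move=> H.
set r := polyn P.
have Hroot : root (r - (r.[1])%:P) 1 by rewrite /root hornerD hornerN hornerC subrr.
have [q Hq] := factor_theorem _ _ Hroot.
have EP : P = io q * (1 + x) + io ((r.[1])%:P).
  have E2 : io r = io q * io ('X - 1%:P) + io (r.[1]%:P) by rewrite -rmorphM -rmorphD -Hq subrK.
  have E3 : io ('X - 1%:P) = 1 + x by rewrite rmorphB /= rmorph1 Q_opp addrC.
  by rewrite -E3 -E2 /r iota_val.
case: (F2_cases r.[1]) => E1.
  by exists (io q); rewrite EP E1 rmorph0 addr0.
exfalso; move: H; rewrite EP E1 rmorph1 mulrDl -mulrA xNq1 mulr0 add0r mul1r.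
by move/eqP; rewrite (negbTE Nq_neq0).
Qed.

Lemma wq1 : (wq 1%R <= 1)%N.
Proof. by have := wqX 0; rewrite expr0. Qed.

Definition Sum (w : Q) L := \sum_(k < L) w ^+ k.

Lemma SumD w a b : Sum w (a + b) = Sum w a + w ^+ a * Sum w b.
Proof.
rewrite /Sum big_split_ord /= mulr_sumr; congr (_ + _); apply: eq_bigr => i _.
by rewrite exprD.
Qed.

Lemma Sum1 w : Sum w 1 = 1.
Proof. by rewrite /Sum big_ord1 expr0. Qed.

Lemma Sum0 w : Sum w 0 = 0.
Proof. by rewrite /Sum big_ord0. Qed.

Lemma SumM w a b : Sum (w ^+ b) a * Sum w b = Sum w (a * b).
Proof.
elim: a => [|a IH]; first by rewrite !Sum0 mul0r.
rewrite -(addn1 a) SumD Sum1 mulr1 mulrDl IH mulnDl mul1n SumD -exprM.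
by rewrite mulnC.
Qed.

Section Core.
Variables (h e : nat).
Hypothesis hh : (2 <= h)%N.
Hypothesis hnh : n = (2 * h * h)%N.
Variable z : Q.
Hypothesis hz : z = x ^+ e.
Hypothesis hr : exists r, 1 + x = r * (1 + z).
Hypothesis hN : Sum z n = Nq.
Local Notation D := (2 * h + 1)%N.

Lemma zn : z ^+ n = 1.
Proof. by rewrite hz -exprM mulnC exprM xn expr1n. Qed.

Lemma zNq k : z ^+ k * Nq = Nq.
Proof. by rewrite hz -exprM xkNq. Qed.

Lemma wqz k : (wq (z ^+ k)%R <= 1)%N.
Proof. by rewrite hz -exprM wqX. Qed.

Lemma wqSum k L : (wq (Sum (z ^+ k)%R L) <= L)%N.
Proof.
have -> : Sum (z ^+ k) L = \sum_(i < L) x ^+ (e * k * i)%N.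
  by rewrite /Sum; apply: eq_bigr => i _; rewrite hz -!exprM ?mulnA.
exact: wq_sum.
Qed.

Lemma wq1z k : (wq (1 + z ^+ k)%R <= 2)%N.
Proof. by apply: leq_trans (wqD _ _) _; rewrite (leq_add wq1 (wqz k)). Qed.

Lemma zsh k : z ^+ (n + k) = z ^+ k.
Proof. by rewrite exprD zn mul1r. Qed.

Variables (p q j1 j2 : Q).
Local Notation P := (p + j1 * (1 + z)).
Local Notation V := (q + j2 * (1 + z ^+ D)).
Hypothesis hC1 : P * (1 + z ^+ D) + V * (1 + z) = 0.

Definition W g t := P * g + V * t.

Lemma Wconst g t : (1 + z) * g = (1 + z ^+ D) * t -> W g t = 0 \/ W g t = Nq.
Proof.
move=> Hgt; apply: const_lemma; have [r ->] := hr.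
have E : (1 + z) * W g t = P * ((1 + z) * g) + V * (1 + z) * t by rewrite /W; ring.
rewrite -mulrA E Hgt.
have -> : P * ((1 + z ^+ D) * t) + V * (1 + z) * t = (P * (1 + z ^+ D) + V * (1 + z)) * t by ring.
by rewrite hC1 mul0r mulr0.
Qed.

Lemma Wbound g t H : (1 + z) * g = H -> (1 + z ^+ D) * t = H -> (wq H <= 2)%N ->
  W g t = Nq -> (n <= wq p * wq g + wq q * wq t + 2 * (wq j1 + wq j2))%N.
Proof.
move=> Hg Ht HH HW.
have E : W g t = p * g + j1 * ((1 + z) * g) + (q * t + j2 * ((1 + z ^+ D) * t)).
  by rewrite /W; ring.
rewrite Hg Ht in E.
rewrite -{1}wqN -HW E.
have B1 := wqM p g.
have B2 : (wq (j1 * H)%R <= wq j1 * 2)%N.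
  by apply: leq_trans (wqM _ _) _; rewrite leq_mul2l HH orbT.
have B3 := wqM q t.
have B4 : (wq (j2 * H)%R <= wq j2 * 2)%N.
  by apply: leq_trans (wqM _ _) _; rewrite leq_mul2l HH orbT.
have S1 := wqD (p * g + j1 * H) (q * t + j2 * H).
have S2 := wqD (p * g) (j1 * H).
have S3 := wqD (q * t) (j2 * H).
apply: leq_trans S1 _; apply: leq_trans (leq_add S2 S3) _.
apply: leq_trans (leq_add (leq_add B1 B2) (leq_add B3 B4)) _.
lia.
Qed.

Definition gA := Sum z h.
Definition tA := Sum (z ^+ D) h.
Definition gB := z ^+ (n - h - 1) * Sum z (h + 1).
Definition tB := Sum (z ^+ D) (h - 1).
Definition gC := z ^+ (n - 1).
Definition tC := Sum (z ^+ D) (2 * h - 1).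
Definition SD := Sum z D.

Lemma N1 : (D * h = n + h)%N. Proof. rewrite hnh; nia. Qed.
Lemma N2 : (D * (h - 1) = n - h - 1)%N. Proof. rewrite hnh; nia. Qed.
Lemma N3 : (D * (2 * h - 1) = n + (n - 1))%N. Proof. rewrite hnh; nia. Qed.
Lemma N4 : (n - h - 1 + (h + 1) = n)%N. Proof. rewrite hnh; nia. Qed.
Lemma N5 : (h + (n - h - 1) = n - 1)%N. Proof. rewrite hnh; nia. Qed.
Lemma N6 : ((n - 1).+1 = n)%N. Proof. rewrite hnh; nia. Qed.
Lemma N7 : (D = (h + 1) + h)%N. Proof. nia. Qed.
Lemma N8 : (h = (h - 1) + 1)%N. Proof. nia. Qed.
Lemma N9 : (2 * h - 1 = h + (h - 1))%N. Proof. nia. Qed.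
Lemma N10 : (h * D = n + h)%N. Proof. rewrite hnh; nia. Qed.

Lemma zD a : (z ^+ D) ^+ a = z ^+ (D * a).
Proof. by rewrite exprM. Qed.

Lemma HA : (1 + z) * gA = 1 + z ^+ h.
Proof. by rewrite /gA geo. Qed.
Lemma HA' : (1 + z ^+ D) * tA = 1 + z ^+ h.
Proof. by rewrite /tA geo zD N1 zsh. Qed.
Lemma HB : (1 + z) * gB = 1 + z ^+ (n - h - 1).
Proof. by rewrite /gB mulrCA geo mulrDr mulr1 -exprD N4 zn addrC. Qed.
Lemma HB' : (1 + z ^+ D) * tB = 1 + z ^+ (n - h - 1).
Proof. by rewrite /tB geo zD N2. Qed.
Lemma HC : (1 + z) * gC = 1 + z ^+ (n - 1).
Proof. have E : z * z ^+ (n - 1) = z ^+ n by rewrite -exprS N6. by rewrite /gC mulrDl mul1r E zn addrC. Qed.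
Lemma HC' : (1 + z ^+ D) * tC = 1 + z ^+ (n - 1).
Proof. by rewrite /tC geo zD N3 zsh. Qed.

Lemma tCE : tC = tA + z ^+ h * tB.
Proof. by rewrite /tC /tA /tB N9 SumD zD N1 zsh. Qed.

Lemma gCE : gC = gA + z ^+ h * gB.
Proof.
rewrite /gB /gA /gC mulrA -exprD N5 addnC SumD Sum1 expr1 mulrDr mulr1 mulrA -exprSr N6 zn mul1r.
by rewrite addrCA Q_addxx addr0.
Qed.

Lemma tABE : tA + tB = z ^+ (n - h - 1).
Proof. have -> : tA = Sum (z ^+ D) ((h - 1) + 1) by rewrite -N8. by rewrite /tB SumD Sum1 mulr1 zD N2 addrAC Q_addxx add0r. Qed.

Lemma gABE : gA + gB = z ^+ (n - h - 1) * SD.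
Proof. by rewrite /SD N7 SumD mulrDr mulrA -exprD N4 zn mul1r addrC. Qed.

Lemma R3 : gA + SD * tA = Nq.
Proof.
rewrite /tA /SD mulrC SumM N10 SumD hN zn mul1r /gA.
by rewrite addrCA Q_addxx addr0.
Qed.

Lemma WR1 : W gC tC = W gA tA + z ^+ h * W gB tB.
Proof. rewrite /W gCE tCE; ring. Qed.

Lemma WR2 : W gA tA + W gB tB = z ^+ (n - h - 1) * (P * SD + V).
Proof.
have -> : W gA tA + W gB tB = P * (gA + gB) + V * (tA + tB) by rewrite /W; ring.
rewrite gABE tABE; ring.
Qed.

Lemma core : ~ (exists c, P = c * (1 + z) /\ V = c * (1 + z ^+ D)) ->
  (2 * h <= wq j1 + wq j2 + wq p + wq q)%N.
Proof.
move=> NC2.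
have wgA : (wq gA <= h)%N by have := wqSum 1 h; rewrite expr1.
have wtA : (wq tA <= h)%N by exact: wqSum.
have wgB : (wq gB <= h + 1)%N.
  apply: leq_trans (wqM _ _) _; apply: (@leq_trans (1 * (h + 1))); last by rewrite mul1n.
  apply: leq_mul; first exact: wqz.
  by have := wqSum 1 (h + 1); rewrite expr1.
have wtB : (wq tB <= h - 1)%N by exact: wqSum.
have wgC : (wq gC <= 1)%N by exact: wqz.
have wtC : (wq tC <= 2 * h - 1)%N by exact: wqSum.
have [WA0|WAN] := Wconst (t := tA) (g := gA) (etrans HA (esym HA')).
  have [WB0|WBN] := Wconst (t := tB) (g := gB) (etrans HB (esym HB')).
    exfalso; apply: NC2.
    have E1 := WR2; rewrite WA0 WB0 add0r in E1.
    have E2 : P * SD + V = 0.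
      by have := congr1 (fun u => z ^+ (h + 1) * u) E1; rewrite mulr0 mulrA -exprD addnC N4 zn mul1r.
    have EV : V = P * SD by move/eqP: E2; rewrite addrC addr_eq0 Q_opp => /eqP.
    have E3 : P * Nq = 0 by rewrite -R3 mulrDr mulrA -EV; exact: WA0.
    have [c Hc] := factor_lemma E3.
    have [r Hr] := hr.
    exists (c * r); split; first by rewrite Hc Hr mulrA.
    by rewrite EV Hc Hr mulrA -mulrA /SD geo.
  have [WC0|WCN] := Wconst (t := tC) (g := gC) (etrans HC (esym HC')).
    exfalso; have := WR1; rewrite WC0 WA0 WBN add0r zNq => E.
    by move: Nq_neq0; rewrite -E eqxx.
  have BB := Wbound HB HB' (wq1z _) WBN.
  have BC := Wbound HC HC' (wq1z _) WCN.
  have BB' : (n <= (h + 1) * wq p + (h - 1) * wq q + 2 * (wq j1 + wq j2))%N.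
    apply: leq_trans BB _; rewrite leq_add2r; apply: leq_add.
      by rewrite mulnC leq_mul.
    by rewrite mulnC leq_mul.
  have BC' : (n <= wq p + (2 * h - 1) * wq q + 2 * (wq j1 + wq j2))%N.
    apply: leq_trans BC _; rewrite leq_add2r; apply: leq_add.
      by rewrite -[X in (_ <= X)%N]muln1 leq_mul.
    by rewrite mulnC leq_mul.
  rewrite hnh in BB' BC'.
  have := arithBC hh BB' BC'; lia.
have BA := Wbound HA HA' (wq1z _) WAN.
have BA' : (n <= h * wq p + h * wq q + 2 * (wq j1 + wq j2))%N.
  apply: leq_trans BA _; rewrite leq_add2r; apply: leq_add.
    by rewrite mulnC leq_mul.
  by rewrite mulnC leq_mul.
rewrite hnh in BA'.
have := arithA hh BA'; lia.
Qed.

End Core.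

End Quot.

Section Final.
Variable n : nat.
Hypothesis hn : (0 < n)%N.
Local Notation m := (modulus n).
Local Notation Q := {poly %/ m}.
Local Notation io := (in_qpoly m).
Local Notation x := (x n).

Lemma inv_uniq (a b c : Q) : a * b = 1 -> c * b = 1 -> a = c.
Proof. by move=> H1 H2; rewrite -[a]mulr1 -H2 mulrCA H1 mulr1. Qed.

Lemma xpow_inv k : (k <= n)%N -> (x ^+ (n - 1)) ^+ k = x ^+ (n - k).
Proof.
move=> Hk; apply: (@inv_uniq _ (x ^+ k)).
  have E : ((n - 1) * k + k = n * k)%N by nia.
  by rewrite -!exprM -exprD E exprM xn // expr1n.
by rewrite -exprD subnK // xn.
Qed.

Lemma hN' : Sum (x ^+ (n - 1)) n = Nq n.
Proof.
rewrite /Sum /Nq.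
rewrite (eq_bigr (fun i : 'I_n => x ^+ (n - i))); last first.
  by move=> i _; rewrite xpow_inv // ltnW.
rewrite (reindex_inj rev_ord_inj) /=.
rewrite (eq_bigr (fun i : 'I_n => x * x ^+ i)); last first.
  by move=> i _; rewrite subKn // exprS.
by rewrite -mulr_sumr xNq.
Qed.

Lemma hr' : exists r : Q, 1 + x = r * (1 + x ^+ (n - 1)).
Proof.
exists x; rewrite mulrDr mulr1 -exprS subn1 prednK // xn //.
by rewrite addrC.
Qed.

Lemma SumNq k L : Sum (x ^+ k) L * Nq n = if odd L then Nq n else 0.
Proof.
elim: L => [|L IH]; first by rewrite Sum0 mul0r.
rewrite -(addn1 L) SumD Sum1 mulr1 mulrDl IH -exprM xkNq // addn1 /=.
by case: (odd L); rewrite ?Q_addxx ?add0r.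
Qed.
End Final.

Lemma theorem9_aux (d : nat) :
  (4 <= d)%N -> ~~ odd d ->
  effective_distance_RL ((d * d)%N./2) d d.
Proof.
move=> H4 Hev.
set h := d./2.
have Hd : d = (2 * h)%N.
  by rewrite mul2n /h -[d in LHS](odd_double_half d) (negbTE Hev) add0n.
have hh : (2 <= h)%N by lia.
set n := (d * d)./2.
have hnh : n = (2 * h * h)%N.
  rewrite /n Hd (_ : (2 * h * (2 * h) = (2 * h * h).*2)%N) ?doubleK //.
  by rewrite -mul2n; nia.
have hn : (0 < n)%N by rewrite hnh; nia.
have Dd : (d.+1 = 2 * h + 1)%N by lia.
have LB : forall j u v, RL_bad n d j u v -> (d <= wt n j + wt n u + wt n v)%N.
  move=> j u v [[HC1 HnC2]|[HC1 HnC2]].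
    have hC1 : (in_qpoly (modulus n) u + in_qpoly (modulus n) j * (1 + x n)) * (1 + x n ^+ (2 * h + 1))
       + (in_qpoly (modulus n) v + 0 * (1 + x n ^+ (2 * h + 1))) * (1 + x n) = 0.
      rewrite mul0r addr0; move/(eqR_iota hn): HC1.
      by rewrite !(rmorphD, rmorphM, rmorph1, rmorph0, rmorphXn) Dd => H; exact: H.
    have := core hn hh hnh (esym (expr1 _)) (ex_intro _ 1 (esym (mul1r _))) (erefl _) hC1.
    rewrite !(wt_iota hn) (wq0 n) addn0 Hd => H; apply: H.
    move=> [c [Hc1 Hc2]]; apply: HnC2; exists (polyn c).
    rewrite mul0r addr0 in Hc2.
    split; apply/(eqR_iota hn); rewrite !(rmorphD, rmorphM, rmorph1, rmorphXn) ?Dd.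
      transitivity (c * (1 + x n)); [exact: Hc1 | congr (_ * _); exact: esym (iota_val hn c)].
    transitivity (c * (1 + x n ^+ (2 * h + 1))); [exact: Hc2 | congr (_ * _); exact: esym (iota_val hn c)].
  have HD : (2 * h + 1 <= n)%N by rewrite hnh; nia.
  have Ez : x n ^+ (n - d.+1) = (x n ^+ (n - 1)) ^+ (2 * h + 1) by rewrite Dd xpow_inv.
  have hC1 : (in_qpoly (modulus n) v + 0 * (1 + x n ^+ (n - 1))) * (1 + (x n ^+ (n - 1)) ^+ (2 * h + 1))
     + (in_qpoly (modulus n) u + in_qpoly (modulus n) j * (1 + (x n ^+ (n - 1)) ^+ (2 * h + 1))) * (1 + x n ^+ (n - 1)) = 0.
    rewrite mul0r addr0 addrC -Ez; move: HC1; rewrite /C1' /xinv => /(eqR_iota hn).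
    by rewrite !(rmorphD, rmorphM, rmorph1, rmorph0, rmorphXn) => H; exact: H.
  have := core hn hh hnh (erefl _) (hr' hn) (hN' hn) hC1.
  rewrite !(wt_iota hn) (wq0 n) add0n Hd => H; apply: leq_trans (H _) _; last by lia.
  move=> [c [Hc1 Hc2]]; apply: HnC2; exists (polyn c).
  rewrite mul0r addr0 in Hc1.
  rewrite /xinv; split; apply/(eqR_iota hn); rewrite !(rmorphD, rmorphM, rmorph1, rmorphXn).
    transitivity (c * (1 + (x n ^+ (n - 1)) ^+ (2 * h + 1))).
      by rewrite -Ez in Hc2 *; exact: Hc2.
    by rewrite -Ez; congr (_ * _); exact: esym (iota_val hn c).
  transitivity (c * (1 + x n ^+ (n - 1))); [exact: Hc1 | congr (_ * _); exact: esym (iota_val hn c)].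
split; last exact: LB.
set u0 : poly2 := \sum_(k < 2 * h - 1) 'X^((2 * h + 1) * k).
set v0 : poly2 := 'X^(n - 1).
have Eu0 : in_qpoly (modulus n) u0 = \sum_(k < 2 * h - 1) x n ^+ ((2 * h + 1) * k).
  by rewrite /u0 rmorph_sum; apply: eq_bigr => k _; rewrite rmorphXn.
have EtC : in_qpoly (modulus n) u0 = tC h (x n).
  by rewrite Eu0 /tC /Sum; apply: eq_bigr => k _; rewrite exprM.
have Hz1 : x n = x n ^+ 1 by rewrite expr1.
have Hbad : RL_bad n d 0 u0 v0.
  left; split.
    apply/(eqR_iota hn); rewrite mul0r addr0 rmorph0.
    rewrite !(rmorphD, rmorphM, rmorph1, rmorphXn) Dd.
    have E1 := HC' hn hh hnh Hz1.
    have E2 := HC hn hh hnh Hz1.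
    rewrite /gC in E2.
    transitivity (in_qpoly (modulus n) u0 * (1 + x n ^+ (2 * h + 1)) + x n ^+ (n - 1) * (1 + x n)).
      by [].
    by rewrite EtC mulrC E1 mulrC E2 Q_addxx.
  move=> [c [Hc1 _]]; move/(eqR_iota hn): Hc1.
  rewrite mul0r addr0 rmorphM rmorphD rmorph1 EtC => Hc.
  have : tC h (x n) * Nq n = 0.
    transitivity (in_qpoly (modulus n) c * ((1 + x n) * Nq n)).
      by rewrite mulrA -Hc.
    by rewrite xNq1 // mulr0.
  rewrite /tC SumNq //.
  have -> : odd (2 * h - 1).
    have -> : (2 * h - 1 = (h - 1).*2.+1)%N by rewrite -mul2n; lia.
    by rewrite /= odd_double.
  by move/eqP; rewrite (negbTE (Nq_neq0 hn)).
have Hw : (wt n 0 + wt n u0 + wt n v0 <= d)%N.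
  rewrite !(wt_iota hn) rmorph0 (wq0 n) Eu0 /v0 rmorphXn add0n Hd.
  have W1 := wq_sum hn (2 * h - 1) (fun k => ((2 * h + 1) * k)%N).
  have W2 := wqX hn (n - 1).
  apply: leq_trans (leq_add W1 W2) _; lia.
exists 0, u0, v0; split => //.
by apply/eqP; rewrite eqn_leq Hw LB.
Qed.

Local Close Scope ring_scope.

Theorem theorem9 (d : nat) :
  (4 <= d)%N -> ~~ odd d ->
  effective_distance_RL ((d * d)./2) d d.
Proof. exact: theorem9_aux. Qed.
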